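(* Let $\varphi$ be a DBI normal formula and $i\in\mathcal{A}$. (1) Suppose $\varphi=\bigwedge_{j\in G}B_j\omega_j$ with $\varnothing\ne G\subseteq\mathcal{A}$, and either $i\notin G$, or $i\in G$ and $\omega_i=\bigwedge_{j\in H}B_j\pi_j$ has no propositional component. Then for every pointed Kripke model $(\mathcal{M},v)$: $\mathcal{M},v\nvDash B_i\bot$ iff $\mathcal{M}\odot\mathcal{U}_\varphi,(v,0)\nvDash B_i\bot$. (2) Suppose $\varphi=B_i\bigl(\xi\wedge\bigwedge_{k\in H}B_k\pi_k\bigr)\wedge\bigwedge_{j\in G}B_j\omega_j$ where $i\notin G$ and $\xi$ is purely propositional. Then for every pointed Kripke model $(\mathcal{M},v)$: $\mathcal{M},v\vDash\widehat{B}_i\xi$ iff $\mathcal{M}\odot\mathcal{U}_\varphi,(v,0)\nvDash B_i\bot$.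
   Context: Agents $\mathcal{A}=\{1,\dots,n\}$, $n>1$; language $\mathcal{L}$: $\varphi ::= p \mid \neg\varphi \mid (\varphi\wedge\varphi)\mid B_i\varphi$, with $\top,\bot$ as usual and $\widehat{B}_i\varphi:=\neg B_i\neg\varphi$. Kripke model $\mathcal{M}=\langle S,R,V\rangle$ (nonempty $S$, $R_i\subseteq S\times S$, $V:\mathit{Prop}\to 2^S$), standard truth. Action model $\mathcal{U}=\langle E,Q,\mathsf{pre}\rangle$ (nonempty $E$, $Q_i\subseteq E\times E$, $\mathsf{pre}:E\to\mathcal{L}$). Pointed update of $(\mathcal{M},w)$ with $(\mathcal{U},\alpha)$, defined iff $\mathcal{M},w\vDash\mathsf{pre}(\alpha)$: with $T=\{(x,\beta)\in S\times E\mid\mathcal{M},x\vDash\mathsf{pre}(\beta)\}$, $\mathcal{M}\odot\mathcal{U}=\langle S^{\mathcal U},R^{\mathcal U},V^{\mathcal U}\rangle$ where $S^{\mathcal U}$ is the smallest subset of $T$ containing $(w,\alpha)$ closed under: $(x,\beta)\in S^{\mathcal U}$, $(u,\gamma)\in T$, $xR_iu$, $\beta Q_i\gamma$ imply $(u,\gamma)\in S^{\mathcal U}$; $R^{\mathcal U}_i$ relates $(x,\beta),(u,\gamma)\in S^{\mathcal U}$ iff $xR_iu$ and $\beta Q_i\gamma$; $V^{\mathcal U}(p)=\{(x,\beta)\in S^{\mathcal U}\mid x\in V(p)\}$. Target agents: $\mathsf{ta}(p)=\varnothing$, $\mathsf{ta}(\neg\phi)=\mathsf{ta}(\phi)$,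 $\mathsf{ta}(\phi\wedge\psi)=\mathsf{ta}(\phi)\cup\mathsf{ta}(\psi)$, $\mathsf{ta}(B_i\phi)=\{i\}$. DBI formulas: $\varphi ::= B_i\xi \mid B_i(\xi\wedge\varphi)\mid(\varphi\wedge\varphi)\mid B_i\varphi$, $\xi$ purely propositional. DBI normal: $B_i\xi$ always; $B_i\varphi$, $B_i(\xi\wedge\varphi)$ iff $\varphi$ DBI normal and $i\notin\mathsf{ta}(\varphi)$; $\varphi\wedge\psi$ iff both DBI normal and $\mathsf{ta}(\varphi)\cap\mathsf{ta}(\psi)=\varnothing$. Action model $\mathcal{U}_\varphi=\langle E^\varphi,Q^\varphi,\mathsf{pre}^\varphi\rangle$ for DBI normal $\varphi$, recursively; always $E^\varphi=\{0,-1\}\sqcup D^\varphi$, $\varnothing\ne D^\varphi\subseteq\{1,2,\dots\}$, $\mathsf{pre}^\varphi(0)=\mathsf{pre}^\varphi(-1)=\top$; $\underline{Q}_j:=Q_j\cap((E\setminus\{0\})\times(E\setminus\{0\}))$. (1) $\varphi=B_i\xi$: $D=\{m\}$, $\mathsf{pre}(m)=\xi$, $Q_j=\{(0,-1),(m,-1),(-1,-1)\}$ ($j\ne i$), $Q_i=\{(0,m),(m,m),(-1,-1)\}$. (2) $\varphi=B_i\psi$: fresh $m\ge1$, $m\notin D^\psi$; $D^\varphi=D^\psi\sqcup\{m\}$; $\mathsf{pre}^\varphi$ extends $\mathsf{pre}^\psi$ with $\mathsf{pre}^\varphi(m)=\top$; $Q^\varphi_j=\underline{Q}^\psi_j\cup\{(0,-1)\}\cup\{(m,k)\mid(0,k)\in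 Q^\psi_j\}$ ($j\ne i$); $Q^\varphi_i=\underline{Q}^\psi_i\cup\{(0,m),(m,m)\}$. (3) $\varphi=B_i(\xi\wedge\psi)$: as (2) but $\mathsf{pre}^\varphi(m)=\xi$. (4) $\varphi=\psi\wedge\theta$: with $D^\psi\cap D^\theta=\varnothing$, $D^\varphi=D^\psi\sqcup D^\theta$, $\mathsf{pre}^\varphi=\mathsf{pre}^\psi\cup\mathsf{pre}^\theta$, $Q^\varphi_j=\underline{Q}^\psi_j\cup\underline{Q}^\theta_j\cup\{(0,k)\mid(0,k)\in Q^\psi_j\cup Q^\theta_j, k\in D^\psi\sqcup D^\theta\}\cup\{(0,-1)\mid\text{no such }k\text{ exists}\}$. *)

(* Defs.v *)
From Stdlib Require Import ZArith Lia.
From mathcomp Require Import all_boot.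

From Stdlib Require List.


Unset Strict Implicit.
Unset Printing Implicit Defensive.

Section Logic.
Variable n : nat.

Inductive form : Type :=
| Var of nat
| Neg of form
| And of form & form
| Bel of 'I_n & form.

Definition fbot : form := And (Var 0) (Neg (Var 0)).
Definition ftop : form := Neg fbot.
Definition hatB (i : 'I_n) (phi : form) : form := Neg (Bel i (Neg phi)).

Inductive pform : Type :=
| PVar of nat
| PNeg of pform
| PAnd of pform & pform.

Fixpoint pemb (x : pform) : form :=
  match x with
  | PVar p => Var p
  | PNeg a => Neg (pemb a)
  | PAnd a b => And (pemb a) (pemb b)
  end.

Record kmodel := KModel {
  kst : Type;
  krel : 'I_n -> kst -> kst -> Prop;
  kval : nat -> kst -> Prop }.

Fixpoint sat (M : kmodel) (w : kst M) (phi : form) : Prop :=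
  match phi with
  | Var p => kval M p w
  | Neg a => ~ sat M w a
  | And a b => sat M w a /\ sat M w b
  | Bel i a => forall u, krel M i w u -> sat M u a
  end.

Lemma sat_top (M : kmodel) (w : kst M) : sat M w ftop.
Proof. by move=> /= [h1 h2]. Qed.

Record amodel := AModel {
  aev : Type;
  aQ : 'I_n -> aev -> aev -> Prop;
  apre : aev -> form }.

Section Update.
Variables (M : kmodel) (U : amodel) (w : kst M) (alpha : aev U).

(* S^U : smallest subset of T containing (w,alpha) closed under the rule *)
Inductive reach : kst M * aev U -> Prop :=
| reach_base : sat M w (apre U alpha) -> reach (w, alpha)
| reach_step i x beta u gamma :
    reach (x, beta) -> sat M u (apre U gamma) ->
    krel M i x u -> aQ U i beta gamma -> reach (u, gamma).

Definition upd_model : kmodel :=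
  {| kst := {p : kst M * aev U | reach p};
     krel := fun i p q => krel M i (sval p).1 (sval q).1 /\ aQ U i (sval p).2 (sval q).2;
     kval := fun x p => kval M x (sval p).1 |}.

Definition upd_point (h : sat M w (apre U alpha)) : kst upd_model :=
  exist _ (w, alpha) (reach_base h).
End Update.

Inductive dbi : Type :=
| DB of 'I_n & pform
| DBC of 'I_n & pform & dbi
| DBB of 'I_n & dbi
| DAnd of dbi & dbi.

Fixpoint dbi_form (phi : dbi) : form :=
  match phi with
  | DB i xi => Bel i (pemb xi)
  | DBC i xi psi => Bel i (And (pemb xi) (dbi_form psi))
  | DBB i psi => Bel i (dbi_form psi)
  | DAnd a b => And (dbi_form a) (dbi_form b)
  end.

Fixpoint ta (phi : dbi) : {set 'I_n} :=
  match phi with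
  | DB i _ | DBC i _ _ | DBB i _ => [set i]
  | DAnd a b => ta a :|: ta b
  end.

Fixpoint dbi_normal (phi : dbi) : Prop :=
  match phi with
  | DB _ _ => True
  | DBC i _ psi | DBB i psi => dbi_normal psi /\ i \notin ta psi
  | DAnd a b => [/\ dbi_normal a, dbi_normal b & [disjoint ta a & ta b]]
  end.

Fixpoint conjuncts (phi : dbi) : seq dbi :=
  match phi with
  | DAnd a b => conjuncts a ++ conjuncts b
  | _ => [:: phi]
  end.

(* Raw data: D (events >= 1), Q, pre, on events in Z.  Fresh events are chosen
   deterministically: the construction with offset off uses events
   off+1 .. off+dsize phi. *)
Fixpoint dsize (phi : dbi) : Z :=
  match phi with
  | DB _ _ => 1
  | DBC _ _ psi | DBB _ psi => dsize psi + 1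
  | DAnd a b => dsize a + dsize b
  end.

Record raw := Raw {
  rD : Z -> Prop;
  rQ : 'I_n -> Z -> Z -> Prop;
  rpre : Z -> form }.

Definition Qu (U : raw) (j : 'I_n) (a b : Z) : Prop :=
  rQ U j a b /\ a <> 0%Z /\ b <> 0%Z.

Definition raw_box (i : 'I_n) (prem : form) (U : raw) (m : Z) : raw :=
  {| rD := fun k => rD U k \/ k = m;
     rpre := fun k => if (k =? m)%Z then prem else rpre U k;
     rQ := fun j a b =>
       if j == i then Qu U j a b \/ (a = 0 /\ b = m)%Z \/ (a = m /\ b = m)%Z
       else Qu U j a b \/ (a = 0 /\ b = -1)%Z \/ (a = m /\ rQ U j 0%Z b) |}.

Fixpoint Uraw (phi : dbi) (off : Z) : raw :=
  match phi with
  | DB i xi =>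
      let m := (off + 1)%Z in
      {| rD := fun k => k = m;
         rpre := fun k => if (k =? m)%Z then pemb xi else ftop;
         rQ := fun j a b =>
           if j == i then (a = 0 /\ b = m \/ a = m /\ b = m \/ a = -1 /\ b = -1)%Z
           else (a = 0 /\ b = -1 \/ a = m /\ b = -1 \/ a = -1 /\ b = -1)%Z |}
  | DBB i psi => raw_box i ftop (Uraw psi off) (off + dsize psi + 1)%Z
  | DBC i xi psi => raw_box i (pemb xi) (Uraw psi off) (off + dsize psi + 1)%Z
  | DAnd a b =>
      let Ua := Uraw a off in
      let Ub := Uraw b (off + dsize a)%Z in
      let inD k := rD Ua k \/ rD Ub k in
      let from0 j k := rQ Ua j 0%Z k \/ rQ Ub j 0%Z k in
      {| rD := inD;
         rpre := fun k => if (k <=? off + dsize a)%Z then rpre Ua k else rpre Ub k;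
         rQ := fun j x y =>
           Qu Ua j x y \/ Qu Ub j x y \/ (x = 0%Z /\ from0 j y /\ inD y)
           \/ (x = 0%Z /\ y = (-1)%Z /\ ~ (exists k, from0 j k /\ inD k)) |}
  end.

Definition U_phi (phi : dbi) : amodel :=
  let U := Uraw phi 0 in
  {| aev := {k : Z | k = 0%Z \/ k = (-1)%Z \/ rD U k};
     aQ := fun j a b => rQ U j (sval a) (sval b);
     apre := fun a => rpre U (sval a) |}.

Definition ev0 (phi : dbi) : aev (U_phi phi) :=
  exist _ 0%Z (or_introl erefl).

Lemma dsize_pos (phi : dbi) : (0 < dsize phi)%Z.
Proof. elim: phi => //= *; lia. Qed.

Lemma Uraw_pre0 (phi : dbi) (off : Z) :
  (0 <= off)%Z -> rpre (Uraw phi off) 0%Z = ftop.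
Proof.
elim: phi off => [i xi|i xi psi IH|i psi IH|a IHa b IHb] off hoff; cbn -[Z.eqb Z.leb].
- by case: (Z.eqb_spec 0 (off + 1)) => //; lia.
- case: (Z.eqb_spec 0 (off + dsize psi + 1)) => [|_]; last exact: IH.
  by have := dsize_pos psi; lia.
- case: (Z.eqb_spec 0 (off + dsize psi + 1)) => [|_]; last exact: IH.
  by have := dsize_pos psi; lia.
- case: (Z.leb_spec 0 (off + dsize a)) => [_|]; first exact: IHa.
  by have := dsize_pos a; lia.
Qed.

(* M,v |= pre(0), so the pointed update at (v,0) is always defined *)
Lemma pre_ev0 (phi : dbi) (M : kmodel) (v : kst M) :
  sat M v (apre (U_phi phi) (ev0 phi)).
Proof. by cbn -[Z.eqb Z.leb sat]; rewrite Uraw_pre0 //; exact: sat_top. Qed.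

Definition updM (M : kmodel) (phi : dbi) (v : kst M) : kmodel :=
  upd_model M (U_phi phi) v (ev0 phi).
Definition updP (M : kmodel) (phi : dbi) (v : kst M) : kst (updM M phi v) :=
  upd_point M (U_phi phi) v (ev0 phi) (pre_ev0 phi M v).
End Logic.
Arguments Var {n}.
Arguments Neg {n}.
Arguments And {n}.
Arguments Bel {n}.
Arguments fbot {n}.
Arguments ftop {n}.
Arguments hatB {n}.
Arguments pemb {n}.
Arguments kst {n}.
Arguments krel {n}.
Arguments kval {n}.
Arguments sat {n}.
Arguments aev {n}.
Arguments aQ {n}.
Arguments apre {n}.
Arguments upd_model {n}.
Arguments upd_point {n}.
Arguments DB {n}.
Arguments DBC {n}.
Arguments DBB {n}.
Arguments DAnd {n}.
Arguments dbi_form {n}.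
Arguments ta {n}.
Arguments dbi_normal {n}.
Arguments conjuncts {n}.
Arguments dsize {n}.
Arguments Uraw {n}.
Arguments U_phi {n}.
Arguments ev0 {n}.
Arguments updM {n}.
Arguments updP {n}.

(* Main.v *)
Require Import Defs.
From Stdlib Require Import ZArith Lia.
From mathcomp Require Import all_boot.
From Stdlib Require List.

Lemma Uraw_D {n} (phi : dbi n) off k :
  rD _ (Uraw phi off) k -> (off < k <= off + dsize phi)%Z.
Proof.
elim: phi off k => [j xi|j xi psi IH|j psi IH|a IHa b IHb] off k /=.
- lia.
- case => [/IH|]; have := dsize_pos _ psi; lia.
- case => [/IH|]; have := dsize_pos _ psi; lia.
- case => [/IHa|/IHb]; have := dsize_pos _ a; have := dsize_pos _ b; lia.
Qed.

Lemma Uraw_prem1 {n} (phi : dbi n) (off : Z) :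
  (0 <= off)%Z -> rpre _ (Uraw phi off) (-1)%Z = ftop.
Proof.
elim: phi off => [i xi|i xi psi IH|i psi IH|a IHa b IHb] off hoff; cbn -[Z.eqb Z.leb].
- by case: (Z.eqb_spec (-1) (off + 1)) => //; lia.
- case: (Z.eqb_spec (-1) (off + dsize psi + 1)) => [|_]; last exact: IH.
  by have := dsize_pos _ psi; lia.
- case: (Z.eqb_spec (-1) (off + dsize psi + 1)) => [|_]; last exact: IH.
  by have := dsize_pos _ psi; lia.
- case: (Z.leb_spec (-1) (off + dsize a)) => [_|]; first exact: IHa.
  by have := dsize_pos _ a; lia.
Qed.

Lemma L1 {n} (phi : dbi n) off i : (0 <= off)%Z -> dbi_normal phi ->
  i \notin ta phi -> forall y, rQ _ (Uraw phi off) i 0%Z y <-> y = (-1)%Z.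
Proof.
elim: phi off => [j xi|j xi psi IH|j psi IH|a IHa b IHb] off hoff /=.
- move=> _; rewrite in_set1 => /negbTE -> y; lia.
- move=> _; rewrite in_set1 => /negbTE -> y; rewrite /Qu.
  have := dsize_pos _ psi; intuition lia.
- move=> _; rewrite in_set1 => /negbTE -> y; rewrite /Qu.
  have := dsize_pos _ psi; intuition lia.
- case=> na nb _; rewrite in_setU negb_or => /andP[ia ib] y.
  have Ha := IHa off hoff na ia.
  have Hb := IHb (off + dsize a)%Z ltac:(have := dsize_pos _ a; lia) nb ib.
  rewrite /Qu; split.
  + case=> [[_ [h _]]|[[_ [h _]]|[[_ [h1 [h2|h2]]]|[_ [h _]]]]] //.
    * by move: h1 => [/Ha|/Hb] ->.
    * by move: h1 => [/Ha|/Hb] ->.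
  + move=> ->; right; right; right; split=> //; split=> //.
    case=> k [[/Ha|/Hb] -> [/Uraw_D|/Uraw_D]]; have := dsize_pos _ a; lia.
Qed.

Arguments Uraw_D {n phi off k}.
Arguments L1 {n phi off i}.

Definition chead {n} (c : dbi n) : option ('I_n * form n) :=
  match c with
  | DB j xi => Some (j, pemb xi)
  | DBC j xi _ => Some (j, pemb xi)
  | DBB j _ => Some (j, ftop)
  | DAnd _ _ => None
  end.

Lemma L0 {n} (phi : dbi n) c i p : List.In c (conjuncts phi) ->
  chead c = Some (i, p) -> i \in ta phi.
Proof.
elim: phi => [j xi|j xi psi _|j psi _|a IHa b IHb] /=;
  try (by case=> // <- /= [-> _]; rewrite in_set1).
move=> h hc; rewrite in_setU; apply/orP.
case: (List.in_app_or _ _ _ h) => h'.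
- by left; exact: IHa h' hc.
- by right; exact: IHb h' hc.
Qed.
Arguments L0 {n phi c i p}.

Lemma L2 {n} (phi : dbi n) off i p : (0 <= off)%Z -> dbi_normal phi ->
  (exists c, List.In c (conjuncts phi) /\ chead c = Some (i, p)) ->
  exists m, rD _ (Uraw phi off) m /\
    (forall y, rQ _ (Uraw phi off) i 0%Z y <-> y = m) /\ rpre _ (Uraw phi off) m = p.
Proof.
elim: phi off => [j xi|j xi psi IH|j psi IH|a IHa b IHb] off hoff /=.
- move=> _ [c [[<-|//] [<- <-]]]; exists (off + 1)%Z; rewrite eqxx.
  split=> //; split; first lia.
  by rewrite Z.eqb_refl.
- move=> _ [c [[<-|//] [<- <-]]]; exists (off + dsize psi + 1)%Z; rewrite /= eqxx.
  split; first by right.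
  split; last by rewrite Z.eqb_refl.
  move=> y; rewrite /Qu; have := dsize_pos _ psi; intuition lia.
- move=> _ [c [[<-|//] [<- <-]]]; exists (off + dsize psi + 1)%Z; rewrite /= eqxx.
  split; first by right.
  split; last by rewrite Z.eqb_refl.
  move=> y; rewrite /Qu; have := dsize_pos _ psi; intuition lia.
- case=> na nb dis [c [h0 hc]]; case: (List.in_app_or _ _ _ h0) => h.
  + have [m [Dm [Qm Pm]]] := IHa off hoff na (ex_intro _ c (conj h hc)).
    have ib : i \notin ta b by rewrite (disjointFr dis (L0 h hc)).
    have Hb := @L1 _ b (off + dsize a)%Z i ltac:(have := dsize_pos _ a; lia) nb ib.
    have := Uraw_D Dm => rm.
    exists m; split; first by left.
    split.
    * move=> y; rewrite /Qu; split.
      - case=> [[_ [hz _]]|[[_ [hz _]]|[[_ [h1 [h2|h2]]]|[_ [_ hn]]]]] //.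
        + move: h1 => [/Qm hy|/Hb hy]; subst y => //; move: h2 => /Uraw_D; lia.
        + move: h1 => [/Qm hy|/Hb hy]; subst y => //; move: h2 => /Uraw_D; have := dsize_pos _ a; lia.
        + by exfalso; apply: hn; exists m; split; [left; apply/Qm|left].
      - move=> ->; right; right; left; split=> //; split; [left; apply/Qm|left] => //.
    * by case: (Z.leb_spec m (off + dsize a)) => //; lia.
  + have [m [Dm [Qm Pm]]] := IHb (off + dsize a)%Z ltac:(have := dsize_pos _ a; lia) nb (ex_intro _ c (conj h hc)).
    have ia : i \notin ta a by rewrite (disjointFl dis (L0 h hc)).
    have Ha := @L1 _ a off i hoff na ia.
    have := Uraw_D Dm => rm.
    exists m; split; first by right.
    split.
    * move=> y; rewrite /Qu; split.
      - case=> [[_ [hz _]]|[[_ [hz _]]|[[_ [h1 [h2|h2]]]|[_ [_ hn]]]]] //.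
        + move: h1 => [/Ha hy|/Qm hy]; subst y => //; move: h2 => /Uraw_D; lia.
        + move: h1 => [/Ha hy|/Qm hy]; subst y => //; move: h2 => /Uraw_D; have := dsize_pos _ a; lia.
        + by exfalso; apply: hn; exists m; split; [right; apply/Qm|right].
      - move=> ->; right; right; left; split=> //; split; [right; apply/Qm|right] => //.
    * by case: (Z.leb_spec m (off + dsize a)) => //; lia.
Qed.

Lemma reach_pre {n} (M : kmodel n) (U : amodel n) w alpha q :
  @reach n M U w alpha q -> sat M q.1 (apre U q.2).
Proof. by case. Qed.

Lemma belbot {n} (M : kmodel n) (phi : dbi n) (v : kst M) (i : 'I_n) :
  sat (updM M phi v) (updP M phi v) (Bel i fbot) <->
  (forall u g, krel M i v u -> rQ _ (Uraw phi 0) i 0%Z g ->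
     (g = 0%Z \/ g = (-1)%Z \/ rD _ (Uraw phi 0) g) ->
     sat M u (rpre _ (Uraw phi 0) g) -> False).
Proof.
split.
- move=> H u g hR hQ hm hs.
  pose g' : aev (U_phi phi) := exist _ g hm.
  have hr : @reach n M (U_phi phi) v (ev0 phi) (u, g').
    apply: (@reach_step _ M (U_phi phi) v (ev0 phi) i v (ev0 phi) u g') => //.
    exact: (@reach_base n M (U_phi phi) v (ev0 phi) (pre_ev0 _ phi M v)).
  by case: (H (exist _ (u, g') hr) (conj hR hQ)).
- move=> H [[u [g hm]] hr] /= [hR hQ].
  exfalso; apply: (H u g hR hQ hm).
  exact: (reach_pre _ _ _ _ _ hr).
Qed.

Theorem corollary2 (n : nat) (hn : 1 < n) (phi : dbi n) (i : 'I_n) :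
  dbi_normal phi ->
  ((i \notin ta phi \/ exists psi, List.In (DBB i psi) (conjuncts phi)) ->
   forall (M : kmodel n) (v : kst M),
     ~ sat M v (Bel i fbot) <->
     ~ sat (updM M phi v) (updP M phi v) (Bel i fbot))
  /\
  (forall xi : pform,
   (List.In (DB i xi) (conjuncts phi) \/
    exists psi, List.In (DBC i xi psi) (conjuncts phi)) ->
   forall (M : kmodel n) (v : kst M),
     sat M v (hatB i (pemb xi)) <->
     ~ sat (updM M phi v) (updP M phi v) (Bel i fbot)).
Proof.
move=> nphi; split.
- move=> hc M v; rewrite belbot.
  have [g [Qg [Pg mg]]] : exists g, (forall y, rQ _ (Uraw phi 0) i 0%Z y <-> y = g) /\
      rpre _ (Uraw phi 0) g = ftop /\ (g = 0%Z \/ g = (-1)%Z \/ rD _ (Uraw phi 0) g).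
    case: hc => [ni|[psi hp]].
    + exists (-1)%Z; split; first exact: (L1 (Z.le_refl 0) nphi ni).
      by split; [exact: Uraw_prem1|right; left].
    + have [m [Dm [Qm Pm]]] := L2 phi 0%Z i ftop (Z.le_refl 0) nphi
        (ex_intro _ (DBB i psi) (conj hp erefl)).
      by exists m; split=> //; split=> //; right; right.
  split=> H1 H2; apply: H1.
  + move=> u hR; exfalso; apply: (H2 u g hR); [exact/Qg|exact: mg|rewrite Pg; exact: sat_top].
  + by move=> u g' hR; case: (H2 u hR).
- move=> xi hc M v; rewrite belbot.
  have [m [Dm [Qm Pm]]] := L2 phi 0%Z i (pemb xi) (Z.le_refl 0) nphi
    (match hc with
     | or_introl h => ex_intro _ (DB i xi) (conj h erefl)
     | or_intror (ex_intro psi h) => ex_intro _ (DBC i xi psi) (conj h erefl)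
     end).
  rewrite /=; split=> H1 H2; apply: H1.
  + move=> u hR hx; apply: (H2 u m hR); [exact/Qm|right; right; exact: Dm|by rewrite Pm].
  + move=> u g hR /Qm -> _; rewrite Pm; exact: H2 u hR.
Qed.
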